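(* For all integers $n\ge0$, $0\le k\le n$, and all $\beta,\varphi\in[0,2\pi)$, $$[\mathcal D Z^{n,k}](\beta,\varphi)=\frac{2e^{i(n-2k)\varphi}}{n+1}\times\begin{cases}\cos[(n+1)(\beta-\varphi)], & n \text{ even},\\ i\sin[(n+1)(\beta-\varphi)], & n\text{ odd}.\end{cases}$$
   Context: Let $\mathbb D$ be the open unit disc in $\mathbb R^2\cong\mathbb C$ ($z=x^1+ix^2$). The scalar fan-beam Radon transform of a (complex-valued) function $a$ on $\mathbb D$ is defined for $\beta,\varphi\in[0,2\pi)$ with $\cos(\beta-\varphi)\ge0$ by $$[\mathcal D a](\beta,\varphi)=\int_0^{2\cos(\beta-\varphi)}a(\cos\beta-l\cos\varphi,\ \sin\beta-l\sin\varphi)\,dl,$$ i.e. the integral over the chord of the unit circle starting at $e^{i\beta}$ in direction $-(\cos\varphi,\sin\varphi)$; and for $\cos(\beta-\varphi)<0$ by $[\mathcal D a](\beta,\varphi)=-[\mathcal D a](\beta,\varphi+\pi)$ (angle taken mod $2\pi$). Zernike polynomials (paper's numbering), for $n\ge0$, $0\le k\le n$: $$Z^{n,k}(z,\bar z)=\sum_{s=0}^{k}\binom{k}{s}\binom{n-k}{s}z^{n-k-s}(1-z\bar z)^s(-\bar z)^{k-s}\ \ (0\le k\le [n/2]),\qquad Z^{n,k}=(-1)^n\overline{Z^{n,n-k}}\ \ ([n/2]<k\le n),$$ where $[\cdot]$ is the integer part. *)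

(* Defs.v *)
From Stdlib Require Import Reals List.
From Coquelicot Require Import Coquelicot.
Open Scope R_scope.

Definition binomR (n k : nat) : R :=
  if Nat.leb k n then Binomial.C n k else 0.

Definition Csum (m : nat) (f : nat -> C) : C :=
  fold_right Cplus (RtoC 0) (map f (seq 0 (S m))).

Definition Zlow (n k : nat) (z : C) : C :=
  Csum k (fun s =>
    Cmult (RtoC (binomR k s * binomR (n - k) s))
     (Cmult (Cpow z (n - k - s))
      (Cmult (Cpow (Cminus (RtoC 1) (Cmult z (Cconj z))) s)
             (Cpow (Copp (Cconj z)) (k - s))))).

Definition Zernike (n k : nat) (z : C) : C :=
  if Nat.leb k (Nat.div2 n) then Zlow n k z
  else Cmult (RtoC ((-1) ^ n)) (Cconj (Zlow n (n - k) z)).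

(* integral over the chord starting at e^{i beta} in direction -(cos phi, sin phi) *)
Definition chord_int (a : C -> C) (beta phi : R) : C :=
  RInt (V := C_R_CompleteNormedModule)
    (fun l => a (cos beta - l * cos phi, sin beta - l * sin phi)%R)
    0 (2 * cos (beta - phi)).

(* scalar fan-beam Radon transform; for cos(beta-phi) < 0 the direction
   phi+pi is used (the value only depends on phi+pi mod 2pi through cos/sin) *)
Definition fanD (a : C -> C) (beta phi : R) : C :=
  if Rle_dec 0 (cos (beta - phi)) then chord_int a beta phi
  else Copp (chord_int a beta (phi + PI)).

Definition Cexpi (t : R) : C := (cos t, sin t).

(* Main.v *)
Require Import Defs.
From Stdlib Require Import Reals ZArith.
From Coquelicot Require Import Coquelicot.
From Stdlib Require Import Lia Lra Arith List.
Open Scope R_scope.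
Lemma RD_mult (f g : R -> R) x df dg : is_derive f x df -> is_derive g x dg ->
  is_derive (fun t => f t * g t) x (df * g x + f x * dg).
Proof. intros. exact (is_derive_mult (K := R_AbsRing) f g x df dg H H0 Rmult_comm). Qed.
Lemma RD_plus (f g : R -> R) x df dg : is_derive f x df -> is_derive g x dg ->
  is_derive (fun t => f t + g t) x (df + dg).
Proof. intros. exact (is_derive_plus (K := R_AbsRing) f g x df dg H H0). Qed.
Lemma RD_minus (f g : R -> R) x df dg : is_derive f x df -> is_derive g x dg ->
  is_derive (fun t => f t - g t) x (df - dg).
Proof. intros. exact (is_derive_minus (K := R_AbsRing) f g x df dg H H0). Qed.
Lemma RD_const (c : R) x : is_derive (fun _ : R => c) x 0.
Proof. exact (is_derive_const (K := R_AbsRing) c x). Qed.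
Lemma RD_id x : is_derive (fun t : R => t) x 1.
Proof. exact (is_derive_id (K := R_AbsRing) x). Qed.
Lemma RD_eq (f : R -> R) x d d' : d = d' -> is_derive f x d -> is_derive f x d'.
Proof. intros ->; auto. Qed.

Lemma CD_re (f : R -> C) x (d : C) : is_derive f x d -> is_derive (fun t => Re (f t)) x (Re d).
Proof.
  intros H. unfold is_derive in *.
  assert (H2 := filterdiff_comp' (U := R_NormedModule) (V := C_R_NormedModule) (W := R_NormedModule) f (fun p : C => fst p) x _ (fun p : C => fst p) H (filterdiff_linear _ is_linear_fst)).
  eapply filterdiff_ext_lin. exact H2.
  intros y. simpl. reflexivity.
Qed.
Lemma CD_im (f : R -> C) x (d : C) : is_derive f x d -> is_derive (fun t => Im (f t)) x (Im d).
Proof.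
  intros H. unfold is_derive in *.
  assert (H2 := filterdiff_comp' (U := R_NormedModule) (V := C_R_NormedModule) (W := R_NormedModule) f (fun p : C => snd p) x _ (fun p : C => snd p) H (filterdiff_linear _ is_linear_snd)).
  eapply filterdiff_ext_lin. exact H2.
  intros y. simpl. reflexivity.
Qed.
Lemma CD_split (f : R -> C) x (d : C) : is_derive (fun t => Re (f t)) x (Re d) ->
  is_derive (fun t => Im (f t)) x (Im d) -> is_derive f x d.
Proof.
  intros H1 H2.
  assert (H := is_derive_plus (K := R_AbsRing) (V := C_R_NormedModule) _ _ x _ _ (is_derive_scal_l _ x _ (RtoC 1) H1) (is_derive_scal_l _ x _ Ci H2)).
  eapply is_derive_ext in H.
  2:{ intros t. simpl. instantiate (1 := f). destruct (f t) as [p q]. unfold plus, scal; simpl.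
      unfold prod_plus, prod_scal; simpl. unfold plus, scal, mult; simpl. unfold mult; simpl. f_equal; ring. }
  replace d with (plus (G := C_R_NormedModule) (scal (Re d) (RtoC 1)) (scal (Im d) Ci)). exact H.
  destruct d as [p q]. unfold plus, scal; simpl.
      unfold prod_plus, prod_scal; simpl. unfold plus, scal, mult; simpl. unfold mult; simpl. f_equal; ring.
Qed.
Lemma CD_mult (f g : R -> C) x (df dg : C) : is_derive f x df -> is_derive g x dg ->
  is_derive (fun t => Cmult (f t) (g t)) x (Cplus (Cmult df (g x)) (Cmult (f x) dg)).
Proof.
  intros Hf Hg.
  apply CD_re in Hf as Hf1. apply CD_im in Hf as Hf2.
  apply CD_re in Hg as Hg1. apply CD_im in Hg as Hg2.
  apply CD_split.
  - apply (is_derive_ext (fun t => Re (f t) * Re (g t) - Im (f t) * Im (g t))).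
    { intros t. destruct (f t), (g t); reflexivity. }
    eapply RD_eq. 2: apply RD_minus; apply RD_mult; eauto.
    destruct df, dg, (f x), (g x); simpl; ring.
  - apply (is_derive_ext (fun t => Re (f t) * Im (g t) + Im (f t) * Re (g t))).
    { intros t. destruct (f t), (g t); reflexivity. }
    eapply RD_eq. 2: apply RD_plus; apply RD_mult; eauto.
    destruct df, dg, (f x), (g x); simpl; ring.
Qed.
Lemma CD_plus (f g : R -> C) x (df dg : C) : is_derive f x df -> is_derive g x dg ->
  is_derive (fun t => Cplus (f t) (g t)) x (Cplus df dg).
Proof.
  intros Hf Hg.
  apply CD_re in Hf as Hf1. apply CD_im in Hf as Hf2.
  apply CD_re in Hg as Hg1. apply CD_im in Hg as Hg2.
  apply CD_split.
  - apply (is_derive_ext (fun t => Re (f t) + Re (g t))).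
    { intros t. destruct (f t), (g t); reflexivity. }
    eapply RD_eq. 2: apply RD_plus; eauto. destruct df, dg; reflexivity.
  - apply (is_derive_ext (fun t => Im (f t) + Im (g t))).
    { intros t. destruct (f t), (g t); reflexivity. }
    eapply RD_eq. 2: apply RD_plus; eauto. destruct df, dg; reflexivity.
Qed.
Lemma CD_conj (f : R -> C) x (df : C) : is_derive f x df ->
  is_derive (fun t => Cconj (f t)) x (Cconj df).
Proof.
  intros Hf.
  apply CD_re in Hf as Hf1. apply CD_im in Hf as Hf2.
  apply CD_split.
  - apply (is_derive_ext (fun t => Re (f t))).
    { intros t. destruct (f t); reflexivity. }
    destruct df; exact Hf1.
  - apply (is_derive_ext (fun t => 0 - Im (f t))).
    { intros t. destruct (f t); simpl; ring. }
    eapply RD_eq. 2: apply RD_minus; [apply RD_const | eauto]. destruct df; simpl. ring.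
Qed.
Lemma CD_const (c : C) x : is_derive (fun _ : R => c) x (RtoC 0).
Proof. apply CD_split; simpl; apply RD_const. Qed.
Lemma CD_id x : is_derive (fun t : R => RtoC t) x (RtoC 1).
Proof. apply CD_split; simpl. apply RD_id. apply RD_const. Qed.
Lemma CD_eq (f : R -> C) x (d d' : C) : d = d' -> is_derive f x d -> is_derive f x d'.
Proof. intros ->; auto. Qed.
Lemma CD_ext (f g : R -> C) x (d : C) : (forall t, f t = g t) -> is_derive f x d -> is_derive g x d.
Proof. intros. eapply is_derive_ext; eauto. Qed.
Lemma CD_pow (f : R -> C) x (df : C) n : is_derive f x df ->
  is_derive (fun t => Cpow (f t) n) x (Cmult (RtoC (INR n)) (Cmult (Cpow (f x) (pred n)) df)).
Proof.
  intros Hf. induction n.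
  - eapply CD_eq. 2: apply (CD_ext (fun _ => RtoC 1)); [intros; reflexivity | apply CD_const].
    change (INR 0) with 0. ring.
  - apply (CD_ext (fun t => Cmult (f t) (Cpow (f t) n))). { intros; reflexivity. }
    eapply CD_eq. 2: apply (CD_mult _ _ _ _ _ Hf IHn).
    destruct n. change (INR 1) with 1. change (INR 0) with 0. change (pred 1) with 0%nat. change (pred 0) with 0%nat. 
    change (Cpow (f x) 0) with (RtoC 1). ring.
    change (pred (S (S n))) with (S n). change (pred (S n)) with n. rewrite !S_INR, !RtoC_plus, Cpow_S. ring.
Qed.

Lemma fold_Cplus_acc (l : list C) x : fold_right Cplus x l = Cplus (fold_right Cplus (RtoC 0) l) x.
Proof. induction l; simpl. ring. rewrite IHl. ring. Qed.

Lemma Csum_S m f : Csum (S m) f = Cplus (Csum m f) (f (S m)).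
Proof.
  unfold Csum. rewrite (seq_S (S m) 0). rewrite map_app, fold_right_app. simpl.
  rewrite fold_Cplus_acc. ring.
Qed.
Lemma Csum_0 f : Csum 0 f = f 0%nat.
Proof. unfold Csum. simpl. ring. Qed.

Lemma Csum_ext m f g : (forall s, (s <= m)%nat -> f s = g s) -> Csum m f = Csum m g.
Proof.
  induction m; intros H. rewrite !Csum_0. apply H; lia.
  rewrite !Csum_S. rewrite IHm by (intros; apply H; lia). rewrite H by lia. reflexivity.
Qed.
Lemma Csum_plus m f g : Csum m (fun s => Cplus (f s) (g s)) = Cplus (Csum m f) (Csum m g).
Proof. induction m. rewrite !Csum_0. reflexivity. rewrite !Csum_S, IHm. ring. Qed.
Lemma Csum_minus m f g : Csum m (fun s => Cminus (f s) (g s)) = Cminus (Csum m f) (Csum m g).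
Proof. induction m. rewrite !Csum_0. reflexivity. rewrite !Csum_S, IHm. ring. Qed.
Lemma Csum_scal m c f : Csum m (fun s => Cmult c (f s)) = Cmult c (Csum m f).
Proof. induction m. rewrite !Csum_0. reflexivity. rewrite !Csum_S, IHm. ring. Qed.
Lemma Csum_shift m Q : Csum m (fun s => Q (S s)) = Cplus (Cminus (Csum m Q) (Q 0%nat)) (Q (S m)).
Proof.
  induction m. rewrite !Csum_0. ring.
  rewrite !Csum_S, IHm. ring.
Qed.
Lemma Csum_zero m f : (forall s, (s <= m)%nat -> f s = RtoC 0) -> Csum m f = RtoC 0.
Proof.
  induction m; intros H. rewrite Csum_0. apply H; lia.
  rewrite Csum_S, IHm, H by (intros; try apply H; lia). ring.
Qed.

Lemma CD_Csum m (F : nat -> R -> C) (dF : nat -> C) x :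
  (forall s, (s <= m)%nat -> is_derive (F s) x (dF s)) ->
  is_derive (fun t => Csum m (fun s => F s t)) x (Csum m dF).
Proof.
  induction m; intros H.
  - rewrite Csum_0. apply (CD_ext (F 0%nat)). intros; rewrite Csum_0; reflexivity. apply H; lia.
  - rewrite Csum_S. apply (CD_ext (fun t => Cplus (Csum m (fun s => F s t)) (F (S m) t))).
    intros; rewrite Csum_S; reflexivity.
    apply CD_plus. apply IHm; intros; apply H; lia. apply H; lia.
Qed.

Lemma CD_scal (c : C) (f : R -> C) x (df : C) : is_derive f x df ->
  is_derive (fun t => Cmult c (f t)) x (Cmult c df).
Proof.
  intros H. eapply CD_eq. 2: apply (CD_mult (fun _ => c) f x (RtoC 0) df); [apply CD_const | exact H].
  ring.
Qed.
Lemma CD_minus (f g : R -> C) x (df dg : C) : is_derive f x df -> is_derive g x dg ->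
  is_derive (fun t => Cminus (f t) (g t)) x (Cminus df dg).
Proof.
  intros Hf Hg. apply (CD_ext (fun t => Cplus (f t) (Cmult (RtoC (-1)) (g t)))).
  intros; unfold Cminus; ring.
  eapply CD_eq. 2: apply CD_plus; [exact Hf | apply CD_scal; exact Hg]. unfold Cminus; ring.
Qed.

Lemma binomR_out n k : (n < k)%nat -> binomR n k = 0.
Proof. intros H. unfold binomR. destruct (Nat.leb_spec k n); [lia | reflexivity]. Qed.
Lemma binomR_in n k : (k <= n)%nat -> binomR n k = INR (fact n) / (INR (fact k) * INR (fact (n - k))).
Proof. intros H. unfold binomR. destruct (Nat.leb_spec k n); [reflexivity | lia]. Qed.

Lemma fact_nz m : INR (fact m) <> 0. Proof. apply INR_fact_neq_0. Qed.

Lemma binom_I2 j s : (s <= j)%nat -> INR (S s) * binomR j (S s) = INR (j - s) * binomR j s.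
Proof.
  intros H. destruct (Nat.eq_dec s j) as [->|Hne].
  - rewrite binomR_out by lia. rewrite Nat.sub_diag. simpl. ring.
  - rewrite !binomR_in by lia.
    destruct (j - s)%nat as [|m] eqn:E; [lia|].
    replace (j - S s)%nat with m by lia.
    rewrite (fact_simpl s), (fact_simpl m), !mult_INR.
    pose proof (fact_nz s). pose proof (fact_nz m). pose proof (fact_nz j).
    assert (INR (S s) <> 0) by (apply not_0_INR; lia).
    assert (INR (S m) <> 0) by (apply not_0_INR; lia).
    field; auto.
Qed.

Lemma binom_I3 j s : (s <= j)%nat -> (1 <= j)%nat -> INR (j - s) * binomR j s = INR j * binomR (j - 1) s.
Proof.
  intros H H1. destruct (Nat.eq_dec s j) as [->|Hne].
  - rewrite (binomR_out (j-1)) by lia. rewrite Nat.sub_diag. simpl. ring.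
  - rewrite !binomR_in by lia.
    destruct j as [|j']; [lia|]. replace (S j' - 1)%nat with j' by lia.
    replace (S j' - s)%nat with (S (j' - s)) by lia.
    rewrite (fact_simpl j'), (fact_simpl (j' - s)), !mult_INR.
    pose proof (fact_nz s). pose proof (fact_nz j'). pose proof (fact_nz (j' - s)).
    assert (INR (S (j'-s)) <> 0) by (apply not_0_INR; lia).
    field; auto.
Qed.

Lemma binom_I4 N s : binomR N s + binomR N (S s) = binomR (S N) (S s).
Proof.
  destruct (lt_eq_lt_dec s N) as [[Hlt| Heq]|Hgt].
  - rewrite !binomR_in by lia. pose proof (pascal N s Hlt) as HP. unfold Binomial.C in HP. exact HP.
  - subst s. rewrite (binomR_out N (S N)) by lia. rewrite !binomR_in by lia.
    rewrite !Nat.sub_diag. simpl fact. pose proof (fact_nz N). pose proof (fact_nz (S N)). 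
    change (INR 1) with 1. field. split; auto.
  - rewrite !binomR_out by lia. ring.
Qed.

Lemma binomR_0 N : binomR N 0 = 1.
Proof. rewrite binomR_in by lia. rewrite Nat.sub_0_r. simpl fact. change (INR 1) with 1. field. apply fact_nz. Qed.

Definition fa (w : C) (t : R) : C := Cminus w (RtoC t).
Definition fb (w : C) (t : R) : C := Cminus (RtoC t) (Cconj w).
Definition fu (w : C) (t : R) : C := Cplus (RtoC 1) (Cmult (fa w t) (fb w t)).
Definition Mon w p q s t : C := Cmult (Cmult (Cpow (fa w t) p) (Cpow (fb w t) q)) (Cpow (fu w t) s).
Definition dMon w p q s t : C :=
  Cplus (Cplus (Cmult (RtoC (- INR p)) (Mon w (pred p) q s t))
               (Cmult (RtoC (INR q)) (Mon w p (pred q) s t)))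
        (Cmult (RtoC (INR s)) (Cminus (Mon w (S p) q (pred s) t) (Mon w p (S q) (pred s) t))).

Lemma CD_fa w x : is_derive (fa w) x (Copp (RtoC 1)).
Proof. unfold fa. eapply CD_eq. 2: apply CD_minus; [apply CD_const | apply CD_id]. apply injective_projections; simpl; ring. Qed.
Lemma CD_fb w x : is_derive (fb w) x (RtoC 1).
Proof. unfold fb. eapply CD_eq. 2: apply CD_minus; [apply CD_id | apply CD_const]. apply injective_projections; simpl; ring. Qed.
Lemma CD_fu w x : is_derive (fu w) x (Cminus (fa w x) (fb w x)).
Proof. unfold fu. eapply CD_eq. 2: apply CD_plus; [apply CD_const | apply CD_mult; [apply CD_fa | apply CD_fb]].
  ring. Qed.

Lemma CD_Mon w p q s x : is_derive (Mon w p q s) x (dMon w p q s x).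
Proof.
  unfold Mon. eapply CD_eq. 2: apply CD_mult; [apply CD_mult|]; apply CD_pow; [apply CD_fa|apply CD_fb|apply CD_fu].
  unfold dMon, Mon. rewrite !Cpow_S. rewrite RtoC_opp.
  destruct p, q, s; simpl pred; change (INR 0) with 0; ring.
Qed.

Definition alpha (n j s : nat) : R :=
  match s with O => 0 | S s' => binomR j (S s') * binomR (n - j) s' end.
Definition cW (n j s : nat) : R := - alpha n j s / INR j.

Lemma binomR_1 j : binomR j 1 = INR j.
Proof. pose proof (binom_I2 j 0 ltac:(lia)) as H. rewrite binomR_0, Nat.sub_0_r in H.
  change (INR 1) with 1 in H. lra. Qed.

Lemma coef1 n j s : (1 <= j)%nat -> (2 * j <= n)%nat -> (s <= j)%nat ->
  - cW n j s * INR (S (n - j) - s) - cW n j (S s) * INR (S s) = binomR j s * binomR (n - j) s.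
Proof.
  intros Hj Hn Hs. unfold cW, alpha.
  assert (Jnz : INR j <> 0) by (apply not_0_INR; lia).
  destruct s as [|s'].
  - rewrite binomR_1, !binomR_0. change (INR 1) with 1. field. auto.
  - set (A1 := binomR j (S s')). set (B0 := binomR (n-j) s').
    set (A2 := binomR j (S (S s'))). set (B1 := binomR (n-j) (S s')).
    assert (E1 := binom_I2 j (S s') Hs). fold A1 A2 in E1.
    assert (E2 := binom_I2 (n-j) s' ltac:(lia)). fold B0 B1 in E2.
    replace (S (n - j) - S s')%nat with (n - j - s')%nat by lia.
    assert (N1 : INR (S s') <> 0) by (apply not_0_INR; lia).
    assert (N2 : INR (S (S s')) <> 0) by (apply not_0_INR; lia).
    assert (HA2 : A2 = INR (j - S s') * A1 / INR (S (S s'))) by (rewrite <- E1; field; auto).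
    assert (HB1 : B1 = INR (n - j - s') * B0 / INR (S s')) by (rewrite <- E2; field; auto).
    rewrite HA2, HB1. rewrite (minus_INR j (S s')) by lia.
    rewrite !S_INR in *. field. repeat split; auto.
Qed.

Lemma coef2 n j s : (1 <= j)%nat -> (2 * j <= n)%nat -> (s <= j)%nat ->
  cW n j s * INR (j - s) + cW n j (S s) * INR (S s) = - (binomR (j - 1) s * binomR (n - (j - 1)) s).
Proof.
  intros Hj Hn Hs. unfold cW, alpha.
  assert (Jnz : INR j <> 0) by (apply not_0_INR; lia).
  replace (n - (j - 1))%nat with (S (n - j)) by lia.
  destruct s as [|s'].
  - rewrite binomR_1, !binomR_0. change (INR 1) with 1. field. auto.
  - set (A1 := binomR j (S s')). set (B0 := binomR (n-j) s').
    set (A2 := binomR j (S (S s'))). set (B1 := binomR (n-j) (S s')).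
    set (D := binomR (j - 1) (S s')).
    assert (E1 := binom_I2 j (S s') Hs). fold A1 A2 in E1.
    assert (E3 := binom_I3 j (S s') Hs Hj). fold A1 D in E3.
    assert (N2 : INR (S (S s')) <> 0) by (apply not_0_INR; lia).
    assert (HA2 : A2 = INR j * D / INR (S (S s'))) by (rewrite <- E3, <- E1; field; auto).
    rewrite <- (binom_I4 (n - j) s'). fold B0 B1.
    rewrite HA2. 
    replace (- (A1 * B0) / INR j * INR (j - S s')) with (- (INR (j - S s') * A1) * B0 / INR j) by (field; auto).
    rewrite E3. field. auto.
Qed.

Lemma Mon_ext w p q s p' q' s' t : p = p' -> q = q' -> s = s' -> Mon w p q s t = Mon w p' q' s' t.
Proof. intros -> -> ->; reflexivity. Qed.

Definition T1 w n j s t := Mon w (n - j - s) (j - s) s t.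
Definition T2 w n j s t := Mon w (S (n - j) - s) (j - 1 - s) s t.
Definition Gm w n j s t := Mon w (S (n - j) - s) (j - s) s t.
Definition Wj w n j t := Csum j (fun s => Cmult (RtoC (cW n j s)) (Gm w n j s t)).
Definition Fk w n k t := Csum k (fun s => Cmult (RtoC (binomR k s * binomR (n - k) s))
   (Cmult (Cpow (fa w t) (n - k - s)) (Cmult (Cpow (fu w t) s) (Cpow (fb w t) (k - s))))).

Lemma dG_eq w n j s t : (2 * j <= n)%nat -> (s <= j)%nat ->
  dMon w (S (n - j) - s) (j - s) s t =
  Cplus (Cplus (Cmult (RtoC (- INR (S (n - j) - s))) (T1 w n j s t))
               (Cmult (RtoC (INR (j - s))) (T2 w n j s t)))
        (Cmult (RtoC (INR s)) (Cminus (T2 w n j (pred s) t) (T1 w n j (pred s) t))).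
Proof.
  intros Hn Hs. unfold dMon, T1, T2.
  rewrite (Mon_ext w (pred (S (n - j) - s)) (j - s) s (n - j - s) (j - s) s) by lia.
  rewrite (Mon_ext w (S (n - j) - s) (pred (j - s)) s (S (n - j) - s) (j - 1 - s) s) by lia.
  destruct s as [|s'].
  - change (INR 0) with 0. rewrite !RtoC_opp. ring.
  - rewrite (Mon_ext w (S (S (n - j) - S s')) (j - S s') (pred (S s')) (S (n - j) - pred (S s')) (j - 1 - pred (S s')) (pred (S s'))) by (cbn [pred]; lia).
    rewrite (Mon_ext w (S (n - j) - S s') (S (j - S s')) (pred (S s')) (n - j - pred (S s')) (j - pred (S s')) (pred (S s'))) by (cbn [pred]; lia).
    reflexivity.
Qed.

Lemma Wj_deriv w n j t : (1 <= j)%nat -> (2 * j <= n)%nat ->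
  is_derive (Wj w n j) t (Cminus (Fk w n j t) (Fk w n (j - 1) t)).
Proof.
  intros Hj Hn. unfold Wj.
  eapply CD_eq. 2: { apply (CD_Csum j (fun s t => Cmult (RtoC (cW n j s)) (Gm w n j s t))).
    intros s Hs. apply CD_scal. unfold Gm. apply CD_Mon. }
  set (P := fun s => Cmult (RtoC (cW n j s)) (Cplus (Cmult (RtoC (- INR (S (n - j) - s))) (T1 w n j s t))
               (Cmult (RtoC (INR (j - s))) (T2 w n j s t)))).
  set (Q := fun s => Cmult (RtoC (cW n j s)) (Cmult (RtoC (INR s)) (Cminus (T2 w n j (pred s) t) (T1 w n j (pred s) t)))).
  rewrite (Csum_ext j _ (fun s => Cplus (P s) (Q s))).
  2:{ intros s Hs. rewrite dG_eq by lia. unfold P, Q. ring. }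
  rewrite Csum_plus.
  assert (HQ : Csum j Q = Csum j (fun s => Q (S s))).
  { rewrite Csum_shift.
    assert (Q 0%nat = RtoC 0) as -> by (unfold Q; change (INR 0) with 0; ring).
    assert (Q (S j) = RtoC 0) as ->.
    { unfold Q, cW, alpha. rewrite binomR_out by lia.
      replace (- (0 * binomR (n - j) j) / INR j) with 0 by (field; apply not_0_INR; lia). ring. }
    ring. }
  rewrite HQ, <- Csum_plus. clear HQ.
  assert (HF1 : Fk w n j t = Csum j (fun s => Cmult (RtoC (binomR j s * binomR (n - j) s)) (T1 w n j s t))).
  { unfold Fk. apply Csum_ext. intros s Hs. unfold T1, Mon. ring. }
  assert (HF2 : Fk w n (j - 1) t = Csum j (fun s => Cmult (RtoC (binomR (j - 1) s * binomR (n - (j - 1)) s)) (T2 w n j s t))).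
  { unfold Fk. destruct j as [|j']; [lia|]. replace (S j' - 1)%nat with j' by lia.
    rewrite Csum_S. rewrite (binomR_out j' (S j')) by lia.
    rewrite Rmult_0_l, Cmult_0_l. rewrite (Csum_ext j' _ (fun s => Cmult (RtoC (binomR j' s * binomR (n - j') s)) (T2 w n (S j') s t))).
    ring. intros s Hs. unfold T2, Mon. replace (n - j' - s)%nat with (S (n - S j') - s)%nat by lia.
    replace (S j' - 1 - s)%nat with (j' - s)%nat by lia. ring. }
  rewrite HF1, HF2, <- Csum_minus. apply Csum_ext. intros s Hs. unfold P, Q.
  cbn [pred].
  rewrite <- (coef1 n j s Hj Hn Hs).
  assert (E2 : binomR (j - 1) s * binomR (n - (j - 1)) s = - (cW n j s * INR (j - s) + cW n j (S s) * INR (S s)))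
    by (rewrite (coef2 n j s Hj Hn Hs); ring).
  rewrite E2.
  rewrite ?RtoC_minus, ?RtoC_plus, ?RtoC_mult, ?RtoC_opp, ?RtoC_minus, ?RtoC_plus, ?RtoC_mult, ?RtoC_opp. ring.
Qed.

Fixpoint Psi w n k t : C :=
  match k with
  | O => Cmult (RtoC (- / INR (S n))) (Cpow (fa w t) (S n))
  | S k' => Cplus (Psi w n k' t) (Wj w n (S k') t)
  end.

Lemma Fk_0 w n t : Fk w n 0 t = Cpow (fa w t) n.
Proof. unfold Fk. rewrite Csum_0. rewrite !binomR_0. rewrite !Nat.sub_0_r. rewrite Rmult_1_l. change (Cpow (fu w t) 0) with (RtoC 1). change (Cpow (fb w t) 0) with (RtoC 1). rewrite !Cmult_1_l, Cmult_1_r. reflexivity. Qed.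

Lemma Psi_deriv w n k t : (2 * k <= n)%nat -> is_derive (Psi w n k) t (Fk w n k t).
Proof.
  induction k; intros Hk.
  - apply (CD_ext (fun t => Cmult (RtoC (- / INR (S n))) (Cpow (fa w t) (S n)))). reflexivity.
    eapply CD_eq. 2: apply (CD_scal _ (fun t => Cpow (fa w t) (S n))), (CD_pow (fa w)), CD_fa.
    rewrite Fk_0. simpl pred. rewrite <- RtoC_opp.
    assert (INR (S n) <> 0) by (apply not_0_INR; lia).
    generalize (Cpow (fa w t) n). intros [x y].
    apply injective_projections; simpl; field; auto.
  - apply (CD_ext (fun t => Cplus (Psi w n k t) (Wj w n (S k) t))). reflexivity.
    eapply CD_eq. 2: apply (CD_plus (Psi w n k) (Wj w n (S k))); [apply IHk; lia | apply Wj_deriv; lia].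
    replace (S k - 1)%nat with k by lia. ring.
Qed.

Lemma Psi_end w n k t : fu w t = RtoC 0 -> Psi w n k t = Cmult (RtoC (- / INR (S n))) (Cpow (fa w t) (S n)).
Proof.
  intros Hu. induction k. reflexivity.
  simpl Psi. rewrite IHk. unfold Wj. rewrite Csum_zero. ring.
  intros s Hs. destruct s. unfold cW, alpha. replace (- 0 / INR (S k)) with 0 by (field; apply not_0_INR; lia). ring.
  unfold Gm, Mon. rewrite Hu. rewrite Cpow_S. ring.
Qed.

Lemma EX_of (f : R -> C) x (d : C) : is_derive f x d -> ex_derive f x.
Proof. intros H. exists d. exact H. Qed.

Lemma EX_Fk w n k t : ex_derive (Fk w n k) t.
Proof.
  unfold Fk. eapply EX_of. apply (CD_Csum k (fun s t => Cmult (RtoC (binomR k s * binomR (n - k) s))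
   (Cmult (Cpow (fa w t) (n - k - s)) (Cmult (Cpow (fu w t) s) (Cpow (fb w t) (k - s)))))).
  intros s Hs. apply CD_scal. apply CD_mult. apply CD_pow, CD_fa. apply CD_mult. apply CD_pow, CD_fu. apply CD_pow, CD_fb.
Qed.

Lemma z_eq beta phi l : ((cos beta - l * cos phi)%R, (sin beta - l * sin phi)%R) =
  Cmult (Cexpi phi) (fa (Cexpi (beta - phi)) l).
Proof.
  unfold Cexpi, fa. pose proof (sin2_cos2 phi) as H. unfold Rsqr in H.
  rewrite cos_minus, sin_minus.
  apply injective_projections; simpl.
  - transitivity (cos beta * (sin phi * sin phi + cos phi * cos phi) - l * cos phi). rewrite H; ring. ring.
  - transitivity (sin beta * (sin phi * sin phi + cos phi * cos phi) - l * sin phi). rewrite H; ring. ring.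
Qed.

Lemma conj_fa w l : Cconj (fa w l) = Copp (fb w l).
Proof. unfold fa, fb. destruct w. apply injective_projections; simpl; ring. Qed.

Lemma Cexpi_norm x : Cmult (Cexpi x) (Cconj (Cexpi x)) = RtoC 1.
Proof. unfold Cexpi. pose proof (sin2_cos2 x) as H. unfold Rsqr in H.
  apply injective_projections; simpl. rewrite <- H. ring. ring. Qed.

Lemma Zlow_eq n k E w l : (2 * k <= n)%nat -> Cmult E (Cconj E) = RtoC 1 ->
  Zlow n k (Cmult E (fa w l)) = Cmult (Cpow E (n - 2 * k)) (Fk w n k l).
Proof.
  intros Hk HE. unfold Zlow, Fk. rewrite <- Csum_scal. apply Csum_ext. intros s Hs.
  rewrite Cmult_conj, conj_fa.
  assert (H1 : Cminus (RtoC 1) (Cmult (Cmult E (fa w l)) (Cmult (Cconj E) (Copp (fb w l)))) = fu w l).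
  { unfold fu. transitivity (Cplus (RtoC 1) (Cmult (Cmult E (Cconj E)) (Cmult (fa w l) (fb w l)))).
    ring. rewrite HE. ring. }
  rewrite H1.
  assert (H3 : Copp (Cmult (Cconj E) (Copp (fb w l))) = Cmult (Cconj E) (fb w l)) by ring.
  rewrite H3, !Cpow_mult_l.
  replace (n - k - s)%nat with ((n - 2 * k) + (k - s))%nat by lia.
  rewrite Cpow_add_r.
  assert (H2 : Cmult (Cpow E (k - s)) (Cpow (Cconj E) (k - s)) = RtoC 1).
  { rewrite <- Cpow_mult_l, HE. apply Cpow_1_l. }
  generalize dependent (Cpow E (k - s)). generalize (Cpow (Cconj E) (k - s)).
  generalize (Cpow E (n - 2 * k)). generalize (Cpow (fa w l) (n - 2 * k + (k - s))).
  generalize (Cpow (fu w l) s). generalize (Cpow (fb w l) (k - s)).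
  intros Y U X A B' B H2.
  transitivity (Cmult (Cmult (RtoC (binomR k s * binomR (n - k) s)) (Cmult A (Cmult X (Cmult U Y)))) (Cmult B B')).
  ring. rewrite H2. ring.
Qed.

Lemma fa_0 w : fa w 0 = w.
Proof. unfold fa. destruct w. apply injective_projections; simpl; ring. Qed.
Lemma fa_L t : fa (Cexpi t) (2 * cos t) = Copp (Cconj (Cexpi t)).
Proof. unfold fa, Cexpi. apply injective_projections; simpl; ring. Qed.
Lemma fu_0 t : fu (Cexpi t) 0 = RtoC 0.
Proof. unfold fu, fa, fb, Cexpi. pose proof (sin2_cos2 t) as H. unfold Rsqr in H.
  apply injective_projections; simpl. rewrite <- H. ring. ring. Qed.
Lemma fu_L t : fu (Cexpi t) (2 * cos t) = RtoC 0.
Proof. unfold fu, fa, fb, Cexpi. pose proof (sin2_cos2 t) as H. unfold Rsqr in H.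
  apply injective_projections; simpl. rewrite <- H. ring. ring. Qed.

Lemma minus_C (x y : C) : minus (G := C_R_NormedModule) x y = Cminus x y.
Proof. destruct x, y. apply injective_projections; simpl; unfold plus, opp; simpl; ring. Qed.

Definition Vlow n k beta phi : C :=
  Cmult (Cpow (Cexpi phi) (n - 2 * k))
   (Cmult (RtoC (/ INR (S n))) (Cminus (Cpow (Cexpi (beta - phi)) (S n)) (Cpow (Copp (Cconj (Cexpi (beta - phi)))) (S n)))).

Lemma chord_low n k beta phi : (2 * k <= n)%nat ->
  is_RInt (V := C_R_NormedModule) (fun l => Zlow n k ((cos beta - l * cos phi)%R, (sin beta - l * sin phi)%R))
    0 (2 * cos (beta - phi)) (Vlow n k beta phi).
Proof.
  intros Hk.
  set (E := Cexpi phi). set (w := Cexpi (beta - phi)). set (m := (n - 2 * k)%nat).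
  assert (Hd : forall l, is_derive (fun l => Cmult (Cpow E m) (Psi w n k l)) l (Cmult (Cpow E m) (Fk w n k l))).
  { intros l. apply (CD_scal _ (Psi w n k)). apply Psi_deriv. exact Hk. }
  assert (Hc : forall l, continuous (fun l => Cmult (Cpow E m) (Fk w n k l)) l).
  { intros l. apply (ex_derive_continuous (K := R_AbsRing) (V := C_R_NormedModule)). destruct (EX_Fk w n k l) as [d Hd'].
    exists (Cmult (Cpow E m) d). apply (CD_scal _ (Fk w n k)). exact Hd'. }
  pose proof (is_RInt_derive (V := C_R_CompleteNormedModule) (fun l => Cmult (Cpow E m) (Psi w n k l)) (fun l => Cmult (Cpow E m) (Fk w n k l)) 0 (2 * cos (beta - phi)) (fun x _ => Hd x) (fun x _ => Hc x)) as HI.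
  replace (Vlow n k beta phi) with (minus (G := C_R_NormedModule) (Cmult (Cpow E m) (Psi w n k (2 * cos (beta - phi)))) (Cmult (Cpow E m) (Psi w n k 0))).
  eapply is_RInt_ext. 2: exact HI.
  { intros l _. simpl. rewrite z_eq. fold E w. rewrite Zlow_eq; [reflexivity | exact Hk | apply Cexpi_norm]. }
  rewrite minus_C. unfold w. rewrite !Psi_end by (apply fu_L || apply fu_0).
  rewrite fa_L, fa_0. unfold Vlow. fold E w m.
  assert (INR (S n) <> 0) by (apply not_0_INR; lia).
  generalize (Cpow E m) (Cpow (Copp (Cconj w)) (S n)) (Cpow w (S n)). intros [a1 a2] [b1 b2] [c1 c2].
  apply injective_projections; simpl; field; auto.
Qed.

Lemma is_RInt_conj (f : R -> C) a b (I : C) : is_RInt (V := C_R_NormedModule) f a b I ->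
  is_RInt (V := C_R_NormedModule) (fun x => Cconj (f x)) a b (Cconj I).
Proof.
  intros H.
  pose proof (is_RInt_fct_extend_fst (U := R_NormedModule) (V := R_NormedModule) f a b I H) as H1.
  pose proof (is_RInt_fct_extend_snd (U := R_NormedModule) (V := R_NormedModule) f a b I H) as H2.
  apply is_RInt_opp in H2.
  pose proof (is_RInt_fct_extend_pair (U := R_NormedModule) (V := R_NormedModule) (fun x => Cconj (f x)) a b _ _ H1 H2) as H3.
  destruct I as [i1 i2]. simpl in H3. unfold Cconj. simpl.
  eapply is_RInt_ext. 2: exact H3. intros x _. simpl. reflexivity.
Qed.

Lemma is_RInt_Cscal (f : R -> C) a b (I : C) (r : R) : is_RInt (V := C_R_NormedModule) f a b I ->
  is_RInt (V := C_R_NormedModule) (fun x => Cmult (RtoC r) (f x)) a b (Cmult (RtoC r) I).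
Proof.
  intros H. apply (is_RInt_scal _ _ _ r) in H.
  rewrite scal_R_Cmult in H. eapply is_RInt_ext. 2: exact H. intros x _. apply scal_R_Cmult.
Qed.

Definition VZ n k beta phi : C :=
  if Nat.leb k (Nat.div2 n) then Vlow n k beta phi
  else Cmult (RtoC ((-1) ^ n)) (Cconj (Vlow n (n - k) beta phi)).

Lemma chord_Z n k beta phi : (k <= n)%nat ->
  is_RInt (V := C_R_NormedModule) (fun l => Zernike n k ((cos beta - l * cos phi)%R, (sin beta - l * sin phi)%R))
    0 (2 * cos (beta - phi)) (VZ n k beta phi).
Proof.
  intros Hkn. pose proof (Nat.div2_odd n) as Hd.
  assert (Hb : (Nat.b2n (Nat.odd n) <= 1)%nat) by (destruct (Nat.odd n); simpl; lia).
  unfold Zernike, VZ. destruct (Nat.leb_spec k (Nat.div2 n)) as [Hle|Hgt].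
  - apply chord_low. lia.
  - apply is_RInt_Cscal. apply is_RInt_conj. apply chord_low. lia.
Qed.

Lemma parity n : (Nat.even n = true /\ (-1) ^ n = 1 /\ (-1) ^ (S n) = -1) \/
                 (Nat.even n = false /\ (-1) ^ n = -1 /\ (-1) ^ (S n) = 1).
Proof.
  destruct (Nat.even n) eqn:He.
  - left. apply Nat.even_spec in He. destruct He as [p ->]. split; [|split].
    + reflexivity.
    + apply pow_1_even.
    + apply pow_1_odd.
  - right. assert (Ho : Nat.odd n = true) by (rewrite <- Nat.negb_even, He; reflexivity).
    apply Nat.odd_spec in Ho. destruct Ho as [p ->]. split; [reflexivity|split].
    + replace (2 * p + 1)%nat with (S (2 * p)) by lia. apply pow_1_odd.
    + replace (S (2 * p + 1))%nat with (2 * (S p))%nat by lia. apply pow_1_even.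
Qed.

Lemma Cexpi_mult x y : Cmult (Cexpi x) (Cexpi y) = Cexpi (x + y).
Proof. unfold Cexpi. rewrite cos_plus, sin_plus. apply injective_projections; simpl; ring. Qed.
Lemma Cexpi_pow x m : Cpow (Cexpi x) m = Cexpi (INR m * x).
Proof.
  induction m.
  - unfold Cexpi. change (INR 0) with 0. rewrite Rmult_0_l, cos_0, sin_0. reflexivity.
  - rewrite Cpow_S, IHm, Cexpi_mult, S_INR. f_equal. ring.
Qed.
Lemma Cexpi_conj x : Cconj (Cexpi x) = Cexpi (- x).
Proof. unfold Cexpi, Cconj. rewrite cos_neg, sin_neg. reflexivity. Qed.

Definition Xf n t : C := if Nat.even n then RtoC (cos (INR (S n) * t)) else Cmult Ci (RtoC (sin (INR (S n) * t))).

Lemma key1 n t : Cmult (RtoC (/ INR (S n))) (Cminus (Cpow (Cexpi t) (S n)) (Cpow (Copp (Cconj (Cexpi t))) (S n)))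
  = Cmult (RtoC (2 / INR (S n))) (Xf n t).
Proof.
  assert (HN : INR (S n) <> 0) by (apply not_0_INR; lia).
  replace (Copp (Cconj (Cexpi t))) with (Cmult (RtoC (-1)) (Cconj (Cexpi t))) by (apply injective_projections; simpl; ring).
  rewrite Cpow_mult_l, <- Cpow_conj, <- RtoC_pow, Cexpi_pow.
  unfold Xf. destruct (parity n) as [[He [H1 H2]]|[He [H1 H2]]]; rewrite He, H2;
  unfold Cexpi, Cconj; apply injective_projections; simpl; field; auto.
Qed.

Lemma key2 n t : Cmult (RtoC ((-1) ^ n)) (Cconj (Cmult (RtoC (2 / INR (S n))) (Xf n t)))
  = Cmult (RtoC (2 / INR (S n))) (Xf n t).
Proof.
  unfold Xf. destruct (parity n) as [[He [H1 H2]]|[He [H1 H2]]]; rewrite He, H1;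
  apply injective_projections; simpl; ring.
Qed.

Lemma Zexp1 n k : (2 * k <= n)%nat -> IZR (Z.of_nat n - 2 * Z.of_nat k) = INR (n - 2 * k).
Proof. intros H. rewrite INR_IZR_INZ. f_equal. lia. Qed.
Lemma Zexp2 n k : (k <= n)%nat -> (2 * (n - k) <= n)%nat ->
  IZR (Z.of_nat n - 2 * Z.of_nat k) = - INR (n - 2 * (n - k)).
Proof. intros H H'. rewrite INR_IZR_INZ, <- opp_IZR. f_equal. lia. Qed.

Lemma VZ_eq n k beta phi : (k <= n)%nat ->
  VZ n k beta phi = Cmult (Cmult (RtoC (2 / INR (S n))) (Cexpi (IZR (Z.of_nat n - 2 * Z.of_nat k) * phi))) (Xf n (beta - phi)).
Proof.
  intros Hkn. pose proof (Nat.div2_odd n) as Hd.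
  assert (Hb : (Nat.b2n (Nat.odd n) <= 1)%nat) by (destruct (Nat.odd n); simpl; lia).
  unfold VZ, Vlow. destruct (Nat.leb_spec k (Nat.div2 n)) as [Hle|Hgt].
  - rewrite key1, Cexpi_pow, Zexp1 by lia. ring.
  - rewrite key1, Zexp2 by lia.
    rewrite Cmult_conj, Cexpi_pow.
    rewrite Cexpi_conj.
    set (Y := Cmult (RtoC (2 / INR (S n))) (Xf n (beta - phi))).
    transitivity (Cmult (Cexpi (- (INR (n - 2 * (n - k)) * phi))) (Cmult (RtoC ((-1) ^ n)) (Cconj Y))).
    ring. unfold Y. rewrite key2.
    replace (- (INR (n - 2 * (n - k)) * phi)) with (- INR (n - 2 * (n - k)) * phi) by ring.
    ring.
Qed.

Lemma chord_reflect (a : C -> C) beta phi (I : C) :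
  is_RInt (V := C_R_NormedModule) (fun l => a ((cos beta - l * cos phi)%R, (sin beta - l * sin phi)%R)) 0 (2 * cos (beta - phi)) I ->
  is_RInt (V := C_R_NormedModule) (fun l => a ((cos beta - l * cos (phi + PI))%R, (sin beta - l * sin (phi + PI))%R)) 0 (2 * cos (beta - (phi + PI))) (Copp I).
Proof.
  intros H.
  set (f := fun l => a ((cos beta - l * cos phi)%R, (sin beta - l * sin phi)%R)) in H.
  assert (H' : is_RInt (V := C_R_NormedModule) f (-1 * 0 + 0) (-1 * (- (2 * cos (beta - phi))) + 0) I).
  { replace (-1 * 0 + 0) with 0 by ring. replace (-1 * (- (2 * cos (beta - phi))) + 0) with (2 * cos (beta - phi)) by ring. exact H. }
  apply is_RInt_comp_lin in H'. apply is_RInt_opp in H'.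
  replace (2 * cos (beta - (phi + PI))) with (- (2 * cos (beta - phi))).
  2:{ replace (beta - (phi + PI)) with ((beta - phi) - PI) by ring. rewrite (cos_minus (beta - phi) PI), cos_PI, sin_PI. ring. }
  replace (Copp I) with (opp (G := C_R_NormedModule) I) by reflexivity.
  eapply is_RInt_ext. 2: exact H'.
  intros x _. unfold f. rewrite neg_cos, neg_sin.
  rewrite scal_R_Cmult.
  replace ((cos beta - (-1 * x + 0) * cos phi)%R, (sin beta - (-1 * x + 0) * sin phi)%R)
    with ((cos beta - x * - cos phi)%R, (sin beta - x * - sin phi)%R) by (apply injective_projections; simpl; ring).
  generalize (a ((cos beta - x * - cos phi)%R, (sin beta - x * - sin phi)%R)). intros [p q].
  apply injective_projections; simpl; unfold opp; simpl; ring.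
Qed.

Theorem theorem2 (n k : nat) (beta phi : R) :
  (k <= n)%nat ->
  0 <= beta < 2 * PI ->
  0 <= phi < 2 * PI ->
  fanD (Zernike n k) beta phi =
  Cmult (Cmult (RtoC (2 / INR (n + 1)))
               (Cexpi (IZR (Z.of_nat n - 2 * Z.of_nat k) * phi)))
        (if Nat.even n then RtoC (cos (INR (n + 1) * (beta - phi)))
         else Cmult Ci (RtoC (sin (INR (n + 1) * (beta - phi))))).
Proof.
  intros Hkn _ _.
  rewrite Nat.add_1_r.
  change (if Nat.even n then RtoC (cos (INR (S n) * (beta - phi)))
         else Cmult Ci (RtoC (sin (INR (S n) * (beta - phi))))) with (Xf n (beta - phi)).
  rewrite <- VZ_eq by exact Hkn.
  pose proof (chord_Z n k beta phi Hkn) as HI.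
  unfold fanD, chord_int. destruct (Rle_dec 0 (cos (beta - phi))).
  - exact (is_RInt_unique (V := C_R_CompleteNormedModule) _ _ _ _ HI).
  - rewrite (is_RInt_unique (V := C_R_CompleteNormedModule) _ _ _ _ (chord_reflect _ _ _ _ HI)).
    apply injective_projections; simpl; ring.
Qed.
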